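(* Let $G=(U,V,E)$ be a bipartite graph, let $Y \subseteq V$, and let $X \subseteq U$ be such that $X$ is contained in some minimum-cardinality vertex cover of $G \setminus Y$. Then $X$ is contained in some minimum-cardinality vertex cover of $G$.
   Context: $G=(U,V,E)$ denotes a bipartite graph with vertex set $U\cup V$ and every edge having one end in $U$ and the other in $V$. $G\setminus Y$ denotes the graph obtained by deleting the vertices of $Y$. A vertex cover is a set of vertices incident to all edges. *)

(* Defs.v *)
From mathcomp Require Import all_boot.
Set Implicit Arguments. Unset Strict Implicit. Unset Printing Implicit Defensive.

(* A bipartite graph G = (U, V, E): the two sides are the finite types U and V
   (disjoint by construction), and E : U -> V -> bool is the edge relation.
   A vertex set of such a graph is represented by a pair (CU, CV) of its
   U-part and V-part; its cardinality is #|CU| + #|CV|.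

   More generally we consider the induced subgraph on vertex parts
   AU : {set U}, AV : {set V}; its edges are the edges u v of G with
   u \in AU and v \in AV.  Then G itself is the case AU = AV = setT and
   G \ Y (for Y a set of V-vertices) is the case AU = setT, AV = ~: Y. *)

Section VC.
Variables (U V : finType) (E : U -> V -> bool).

Definition is_vcover (AU : {set U}) (AV : {set V})
    (CU : {set U}) (CV : {set V}) : Prop :=
  [/\ CU \subset AU, CV \subset AV &
      forall u v, u \in AU -> v \in AV -> E u v -> u \in CU \/ v \in CV].

Definition is_min_vcover (AU : {set U}) (AV : {set V})
    (CU : {set U}) (CV : {set V}) : Prop :=
  is_vcover AU AV CU CV /\
  forall CU' CV', is_vcover AU AV CU' CV' -> #|CU| + #|CV| <= #|CU'| + #|CV'|.

End VC.

(* Main.v *)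
Require Import Defs.
From mathcomp Require Import all_boot.
From mathcomp Require Import zify.

Section L.
Variables (U V : finType) (E : U -> V -> bool).

Definition vcb (p : {set U} * {set V}) : bool :=
  [forall u, forall v, E u v ==> (u \in p.1) || (v \in p.2)].

Lemma vcbP CU CV : reflect (is_vcover E [set: U] [set: V] CU CV) (vcb (CU, CV)).
Proof.
apply: (iffP idP).
  move=> /forallP H; split; try by apply/subsetP=> x; rewrite inE.
  move=> u v _ _ Euv; have /forallP/(_ v)/implyP/(_ Euv) := H u.
  by case/orP; [left|right].
case=> _ _ H; apply/forallP=> u; apply/forallP=> v; apply/implyP=> Euv.
by case: (H u v (in_setT _) (in_setT _) Euv) => ->; rewrite ?orbT.
Qed.

Lemma exists_min : exists CU CV, is_min_vcover E [set: U] [set: V] CU CV.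
Proof.
have h0 : vcb (setT, setT) by apply/forallP=> u; apply/forallP=> v; rewrite /= !inE implybT.
case: (@arg_minnP _ (setT, setT) vcb (fun p : {set U} * {set V} => #|p.1| + #|p.2|) h0) => [[CU CV] /vcbP Hc Hmin].
exists CU, CV; split => // CU' CV' /vcbP H'.
exact: (Hmin (CU', CV') H').
Qed.
End L.

Theorem lemma6 (U V : finType) (E : U -> V -> bool) (Y : {set V}) (X : {set U}) :
  (exists CU CV, is_min_vcover E [set: U] (~: Y) CU CV /\ X \subset CU) ->
  exists CU CV, is_min_vcover E [set: U] [set: V] CU CV /\ X \subset CU.
Proof.
case=> [AU [AV [[[_ AVY Acov] Amin] XA]]].
case: (@exists_min U V E) => [CU [CV [[_ _ Ccov] Cmin]]].
set S := (AV :|: Y) :&: CV.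
set W := (AV :|: CV) :&: ~: Y.
have Dcov : is_vcover E [set: U] [set: V] (AU :|: CU) S.
  split; try by apply/subsetP=> x; rewrite inE.
  move=> u v _ _ Euv; rewrite /S !inE.
  case: (Ccov u v (in_setT _) (in_setT _) Euv) => Hc; last first.
    case: (boolP (v \in Y)) => vY; first by right; rewrite orbT Hc.
    have vY' : v \in ~: Y by rewrite inE.
    case: (Acov u v (in_setT _) vY' Euv) => Ha; first by left; rewrite Ha.
    by right; rewrite Ha Hc.
  by left; rewrite Hc orbT.
have Wcov : is_vcover E [set: U] (~: Y) (AU :&: CU) W.
  split; first by apply/subsetP=> x; rewrite inE.
    by apply/subsetP=> x; rewrite /W !inE => /andP[].
  move=> u v _ vY Euv; rewrite /W !inE.
  case: (Ccov u v (in_setT _) (in_setT _) Euv) => Hc.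
    case: (Acov u v (in_setT _) vY Euv) => Ha; first by left; rewrite Ha Hc.
    by right; rewrite Ha; rewrite inE in vY.
  by right; rewrite Hc orbT; rewrite inE in vY.
have h2 := Amin _ _ Wcov.
have h1 := cardsUI AU CU.
have h3 := cardsUI W S.
have h4 := cardsUI AV CV.
have h5 : #|W :|: S| <= #|AV :|: CV|.
  apply: subset_leq_card; apply/subsetP=> x; rewrite /W /S !inE.
  by case: (x \in AV); case: (x \in CV); rewrite ?orbT ?andbF.
have h6 : #|W :&: S| <= #|AV :&: CV|.
  apply: subset_leq_card; apply/subsetP=> x; rewrite /W /S !inE.
  case xA: (x \in AV); case: (x \in CV); rewrite ?andbF //=.
  case: (x \in Y); by rewrite ?andbF.
have hD : #|AU :|: CU| + #|S| <= #|CU| + #|CV| by lia.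
exists (AU :|: CU), S; split; last by apply: subset_trans XA (subsetUl _ _).
split=> // CU' CV' H'; have := Cmin _ _ H'; lia.
Qed.
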